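(* Let $\beta,\lambda,\gamma,M,k_\omega,k_{P_\omega}>0$, $q\ge 1$ and $\omega^*\ge 0$, and consider the system for $E,I\ge 0$, $\omega,P_\omega$: $$\frac{dE}{dt}=\beta(1-\omega)I-\lambda E,\quad \frac{dI}{dt}=\lambda E-\gamma I,\quad \frac{d\omega}{dt}=k_\omega\left(\frac{(\lambda E)^q}{M^q+(\lambda E)^q}(1-\omega^*P_\omega)-\omega\right),\quad \frac{dP_\omega}{dt}=k_{P_\omega}(\omega-P_\omega).$$ Then: 1. If $\beta<\gamma$, the only physically meaningful steady state (with $E,I\ge 0$) is the disease-free steady state $(E,I,\omega,P_\omega)=(0,0,0,0)$, and it is asymptotically stable. 2. If $0<\beta-\gamma<\frac{\gamma}{\omega^*}$, the disease-free steady state is unstable, and the endemic steady state $$(\bar E,\bar I,\bar\omega,\bar P_\omega)=\left(\frac{M}{\lambda}X^{1/q},\ \frac{M}{\gamma}X^{1/q},\ \frac{\beta-\gamma}{\beta},\ \frac{\beta-\gamma}{\beta}\right),\qquad X=\frac{\beta-\gamma}{\gamma-\omega^*(\beta-\gamma)},$$ is positive and asymptotically stable. Furthermore, trajectories near the endemic steady state may or may not exhibit oscillatory behavior, depending on the parameter values. 3. If $\beta-\gamma>\frac{\gamma}{\omega^*}$, the only physically meaningful steady state is the disease-free steady state, and it is unstable.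
   Context: This is a reduced (early-outbreak, one-delay) SEIR behavior-perception model in which the fear of infection has been replaced by its quasi-steady value $(\lambda E)^q/(M^q+(\lambda E)^q)$: $E$ = exposed, $I$ = infectious, $\omega$ = social distancing level, $P_\omega$ = perceived frustration with social distancing; $\beta$ = transmission rate, $\lambda^{-1}$ = incubation period, $\gamma^{-1}$ = infectious period, $k_\omega,k_{P_\omega}$ = rates of change, $M$ = threshold of new daily infections, $q$ = Hill steepness, $\omega^*$ = maximal reduction of social distancing due to frustration. Convention: when $\omega^*=0$ (''no frustration'' case), $\gamma/\omega^*$ is read as $+\infty$. Stability refers to local stability of equilibria. *)

(* Defs.v *)
From HB Require Import structures.
From mathcomp Require Import all_boot all_order all_algebra.
From mathcomp Require Import all_classical all_reals all_analysis.
From mathcomp Require Import complex.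
Set Implicit Arguments. Unset Strict Implicit. Unset Printing Implicit Defensive.
Import Order.TTheory GRing.Theory Num.Theory.
Import numFieldNormedType.Exports.
Local Open Scope classical_set_scope.
Local Open Scope ring_scope.

Section SEIR.
Variable R : realType.

(* State vector x : 'rV[R]_4 with coordinates
   x 0 0 = E, x 0 1 = I, x 0 2 = omega, x 0 3 = P_omega. *)
Definition sE (x : 'rV[R]_4) := x ord0 (inord 0).
Definition sI (x : 'rV[R]_4) := x ord0 (inord 1).
Definition sW (x : 'rV[R]_4) := x ord0 (inord 2).
Definition sP (x : 'rV[R]_4) := x ord0 (inord 3).

Definition mkstate (E I w P : R) : 'rV[R]_4 :=
  \row_(i < 4) match val i with 0 => E | 1 => I | 2 => w | _ => P end.

Definition fear (lam M q E : R) : R :=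
  (lam * E) `^ q / (M `^ q + (lam * E) `^ q).

Definition seir_field (beta lam gam M q kw kP ws : R) (x : 'rV[R]_4) : 'rV[R]_4 :=
  mkstate
    (beta * (1 - sW x) * sI x - lam * sE x)
    (lam * sE x - gam * sI x)
    (kw * (fear lam M q (sE x) * (1 - ws * sP x) - sW x))
    (kP * (sW x - sP x)).

Definition steady_state (F : 'rV[R]_4 -> 'rV[R]_4) (x : 'rV[R]_4) := F x = 0.

Definition phys (x : 'rV[R]_4) := 0 <= sE x /\ 0 <= sI x.

(* Partial derivatives are
   taken from the right (the state space has E >= 0, and the Hill term is only
   defined for E >= 0); where F is differentiable this is the usual derivative. *)
Definition is_jacobian (F : 'rV[R]_4 -> 'rV[R]_4) (x : 'rV[R]_4) (J : 'M[R]_4) :=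
  forall i j : 'I_4,
    (fun h : R => (F (x + h *: delta_mx ord0 j) ord0 i - F x ord0 i) / h)
      @ (0 : R)^'+ --> J i j.

Definition eigenvalue (J : 'M[R]_4) (z : R[i]) :=
  root (map_poly (real_complex R) (char_poly J)) z.

Definition loc_asym_stable (F : 'rV[R]_4 -> 'rV[R]_4) (x : 'rV[R]_4) :=
  exists J, is_jacobian F x J /\ forall z, eigenvalue J z -> Re z < 0.

Definition loc_unstable (F : 'rV[R]_4 -> 'rV[R]_4) (x : 'rV[R]_4) :=
  exists J, is_jacobian F x J /\ exists z, eigenvalue J z /\ 0 < Re z.

Definition loc_oscillatory (F : 'rV[R]_4 -> 'rV[R]_4) (x : 'rV[R]_4) :=
  exists J, is_jacobian F x J /\ exists z, eigenvalue J z /\ Im z != 0.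

Definition gam_over_ws (gam ws : R) : \bar R :=
  if ws == 0 then +oo%E else (gam / ws)%:E.

Definition endemic_X (beta gam ws : R) : R :=
  (beta - gam) / (gam - ws * (beta - gam)).

Definition endemic_ss (beta lam gam M q ws : R) : 'rV[R]_4 :=
  let X := endemic_X beta gam ws in
  mkstate (M / lam * X `^ q^-1) (M / gam * X `^ q^-1)
          ((beta - gam) / beta) ((beta - gam) / beta).

Definition admissible (beta lam gam M q kw kP ws : R) :=
  0 < beta /\ 0 < lam /\ 0 < gam /\ 0 < M /\ 0 < kw /\ 0 < kP /\ 1 <= q /\ 0 <= ws.

Definition regime2 (beta gam ws : R) :=
  0 < beta - gam /\ ((beta - gam)%:E < gam_over_ws gam ws)%E.

End SEIR.

(* Main.v *)
Require Import Defs.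
From HB Require Import structures.
From mathcomp Require Import all_boot all_order all_algebra.
From mathcomp Require Import all_classical all_reals all_analysis.
From mathcomp Require Import complex.
From mathcomp Require Import ring lra.
Set Implicit Arguments. Unset Strict Implicit. Unset Printing Implicit Defensive.
Import Order.TTheory GRing.Theory Num.Theory.
Import numFieldNormedType.Exports.
Local Open Scope classical_set_scope.
Local Open Scope ring_scope.
Lemma det4 (T : comNzRingType) (a : nat -> nat -> T) :
  \det (\matrix_(i < 4, j < 4) a i j) = (a 0%N 0%N * a 1%N 1%N * a 2%N 2%N * a 3%N 3%N) - (a 0%N 0%N * a 1%N 1%N * a 2%N 3%N * a 3%N 2%N) - (a 0%N 0%N * a 1%N 2%N * a 2%N 1%N * a 3%N 3%N) + (a 0%N 0%N * a 1%N 2%N * a 2%N 3%N * a 3%N 1%N) + (a 0%N 0%N * a 1%N 3%N * a 2%N 1%N * a 3%N 2%N) - (a 0%N 0%N * a 1%N 3%N * a 2%N 2%N * a 3%N 1%N) - (a 0%N 1%N * a 1%N 0%N * a 2%N 2%N * a 3%N 3%N) + (a 0%N 1%N * a 1%N 0%N * a 2%N 3%N * a 3%N 2%N) + (a 0%N 1%N * a 1%N 2%N * a 2%N 0%N * a 3%N 3%N) - (a 0%N 1%N * a 1%N 2%N * a 2%N 3%N * a 3%N 0%N) - (a 0%N 1%N * a 1%N 3%N * a 2%N 0%N * a 3%N 2%N) + (a 0%N 1%N * a 1%N 3%N * a 2%N 2%N * a 3%N 0%N) + (a 0%N 2%N * a 1%N 0%N * a 2%N 1%N * a 3%N 3%N)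 - (a 0%N 2%N * a 1%N 0%N * a 2%N 3%N * a 3%N 1%N) - (a 0%N 2%N * a 1%N 1%N * a 2%N 0%N * a 3%N 3%N) + (a 0%N 2%N * a 1%N 1%N * a 2%N 3%N * a 3%N 0%N) + (a 0%N 2%N * a 1%N 3%N * a 2%N 0%N * a 3%N 1%N) - (a 0%N 2%N * a 1%N 3%N * a 2%N 1%N * a 3%N 0%N) - (a 0%N 3%N * a 1%N 0%N * a 2%N 1%N * a 3%N 2%N) + (a 0%N 3%N * a 1%N 0%N * a 2%N 2%N * a 3%N 1%N) + (a 0%N 3%N * a 1%N 1%N * a 2%N 0%N * a 3%N 2%N) - (a 0%N 3%N * a 1%N 1%N * a 2%N 2%N * a 3%N 0%N) - (a 0%N 3%N * a 1%N 2%N * a 2%N 0%N * a 3%N 1%N) + (a 0%N 3%N * a 1%N 2%N * a 2%N 1%N * a 3%N 0%N).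
Proof.
rewrite (expand_det_row _ ord0) !big_ord_recl big_ord0 /cofactor.
rewrite !(expand_det_row _ ord0) !big_ord_recl !big_ord0 /cofactor.
rewrite !(expand_det_row _ ord0) !big_ord_recl !big_ord0 /cofactor.
rewrite !det_mx11 !mxE /bump /=.
ring.
Qed.
Definition jent (T : pzRingType) (l b1 C g A kw B kP : T) (i j : nat) : T :=
  match i, j with
  | 0, 0 => - l | 0, 1 => b1 | 0, 2 => - C
  | 1, 0 => l | 1, 1 => - g
  | 2, 0 => A | 2, 2 => - kw | 2, 3 => - B
  | 3, 2 => kP | 3, 3 => - kP
  | _, _ => 0 end.
Definition Jm (R : realType) (l b1 C g A kw B kP : R) : 'M[R]_4 :=
  \matrix_(i < 4, j < 4) jent l b1 C g A kw B kP i j.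

Local Notation "x %:C" := (real_complex _ x).

Lemma jent_map (R : realType) (l b1 C g A kw B kP : R) i j :
  (jent l b1 C g A kw B kP i j)%:C = jent l%:C b1%:C C%:C g%:C A%:C kw%:C B%:C kP%:C i j.
Proof.
by case: i => [|[|[|[|i]]]]; case: j => [|[|[|[|j]]]]; rewrite /jent ?rmorphN ?rmorph0.
Qed.

Lemma detJ (R : realType) (l b1 C g A kw B kP : R) (z : R[i]) :
  \det (z%:M - map_mx (real_complex R) (Jm l b1 C g A kw B kP)) =
  ((z + kw%:C) * (z + kP%:C) + B%:C * kP%:C) * ((z + l%:C) * (z + g%:C) - l%:C * b1%:C)
  + A%:C * C%:C * (z + g%:C) * (z + kP%:C).
Proof.
pose a := fun i j : nat => (if Nat.eqb i j then z - jent l%:C b1%:C C%:C g%:C A%:C kw%:C B%:C kP%:C i j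
                           else - jent l%:C b1%:C C%:C g%:C A%:C kw%:C B%:C kP%:C i j).
have -> : z%:M - map_mx (real_complex R) (Jm l b1 C g A kw B kP) =
  \matrix_(i < 4, j < 4) a i j.
  apply/matrixP => i j; rewrite /a !mxE jent_map -(inj_eq val_inj) /=.
  case: (boolP (val i == val j)) => /= h; case: (PeanoNat.Nat.eqb_spec i j) => h';
   rewrite ?mulr1n ?mulr0n ?sub0r //; by move/eqP: h.
rewrite (det4 a) /a.
cbv beta iota delta [Nat.eqb jent].
ring.
Qed.
Lemma horner_char (F : comNzRingType) n (A : 'M[F]_n) a :
  \det (a%:M - A) = (char_poly A).[a].
Proof.
rewrite horner_sum; apply: eq_bigr => s _.
rewrite hornerM horner_exp !hornerE; congr (_ * _).
rewrite (big_morph _ (fun p q => hornerM p q a) (hornerC 1 a)).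
by apply: eq_bigr => i _; rewrite !mxE !(hornerE, hornerMn).
Qed.

Lemma eigen_det (R : realType) (J : 'M[R]_4) (z : R[i]) :
  Defs.eigenvalue J z <-> \det (z%:M - map_mx (real_complex R) J) = 0.
Proof.
rewrite /Defs.eigenvalue map_char_poly horner_char /root.
by split => /eqP.
Qed.
Notation cRe := complex.Re.
Notation cIm := complex.Im.
Section CX.
Context {R : realType}.
Implicit Types x y : R[i].
Lemma ReD x y : cRe (x + y) = cRe x + cRe y. Proof. by case: x; case: y. Qed.
Lemma ImD x y : cIm (x + y) = cIm x + cIm y. Proof. by case: x; case: y. Qed.
Lemma ReN x : cRe (- x) = - cRe x. Proof. by case: x. Qed.
Lemma ImN x : cIm (- x) = - cIm x. Proof. by case: x. Qed.
Lemma ReB x y : cRe (x - y) = cRe x - cRe y. Proof. by case: x; case: y. Qed.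
Lemma ImB x y : cIm (x - y) = cIm x - cIm y. Proof. by case: x; case: y. Qed.
Lemma ReM x y : cRe (x * y) = cRe x * cRe y - cIm x * cIm y. Proof. by case: x; case: y. Qed.
Lemma ImM x y : cIm (x * y) = cRe x * cIm y + cIm x * cRe y. Proof. by case: x; case: y. Qed.
Lemma ReC (c : R) : cRe c%:C = c. Proof. by []. Qed.
Lemma ImC (c : R) : cIm c%:C = 0. Proof. by []. Qed.
End CX.
Local Notation cxE := (ReD, ImD, ReN, ImN, ReB, ImB, ReM, ImM, ReC, ImC).

Lemma endemic_root (R : realType) (l g kw kP B K : R) (z : R[i]) :
  0 < l -> 0 < g -> 0 < kw -> 0 < kP -> 0 <= B -> 0 < K -> 0 <= complex.Re z ->
  ((z + kw%:C) * (z + kP%:C) + B%:C * kP%:C) * ((z + l%:C) * (z + g%:C) - l%:C * g%:C)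
  + K%:C * (z + g%:C) * (z + kP%:C) != 0.
Proof.
move=> l0 g0 kw0 kP0 B0 K0 x0; apply/negP => /eqP H.
have H1 := congr1 (@complex.Re R) H; have H2 := congr1 (@complex.Im R) H.
move: H1 H2 x0; rewrite !cxE /=.
move: (complex.Re z) (complex.Im z) => x y H1 H2 x0.
set V1 := (x + kw) * (x + kP) - y * y + B * kP.
set V2 := y * (2 * x + kw + kP).
set W1 := (x + g) * V1 - y * V2.
set W2 := (x + g) * V2 + y * V1.
set T1 := x * (x * x + y * y) + l * (x * x + y * y) + 2 * g * (x * x) + g * (l + g) * x.
set T2 := ((x + kP) * (x + kP) + y * y) * (x + kw) + B * kP * (x + kP).
have key : (V1 * V1 + V2 * V2) * T1 + K * ((x + g) * (x + g) + y * y) * T2 = 0.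
  have E : forall P1 P2 : R, P1 = 0 -> P2 = 0 -> P1 * W1 + P2 * W2 = 0.
    by move=> ? ? -> ->; rewrite !mul0r addr0.
  rewrite -(E _ _ H1 H2).
  rewrite /W1 /W2 /V1 /V2 /T1 /T2; ring.
have s0 : 0 <= x * x + y * y by nra.
have T10 : 0 <= T1.
  rewrite /T1; apply: addr_ge0; [apply: addr_ge0; [apply: addr_ge0|]|].
  - exact: mulr_ge0.
  - by apply: mulr_ge0; lra.
  - by apply: mulr_ge0; [lra|nra].
  - by apply: mulr_ge0 => //; apply: mulr_ge0; lra.
have T20 : 0 < T2.
  have p1 : 0 <= B * kP * (x + kP) by apply: mulr_ge0; [apply: mulr_ge0|]; lra.
  have p3 : 0 < (x + kP) * (x + kP) + y * y.
    have : 0 < (x + kP) * (x + kP) by apply: mulr_gt0; lra.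
    have : 0 <= y * y by nra.
    lra.
  have p2 : 0 < ((x + kP) * (x + kP) + y * y) * (x + kw) by apply: mulr_gt0 => //; lra.
  rewrite /T2; lra.
have : 0 < (V1 * V1 + V2 * V2) * T1 + K * ((x + g) * (x + g) + y * y) * T2.
  have q1 : 0 <= (V1 * V1 + V2 * V2) * T1 by apply: mulr_ge0 => //; nra.
  have q3 : 0 < (x + g) * (x + g) + y * y.
    have : 0 < (x + g) * (x + g) by apply: mulr_gt0; lra.
    have : 0 <= y * y by nra.
    lra.
  have q2 : 0 < K * ((x + g) * (x + g) + y * y) * T2.
    by apply: mulr_gt0 => //; apply: mulr_gt0.
  lra.
by rewrite key ltxx.
Qed.
Lemma coordD (R : realType) (x : 'rV[R]_4) (h : R) (j : 'I_4) k : (k < 4)%N ->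
  (x + h *: delta_mx ord0 j) ord0 (inord k) = if k == val j then x ord0 (inord k) + h
                                             else x ord0 (inord k).
Proof.
move=> Hk; rewrite !mxE eqxx /= -(inj_eq val_inj) /= inordK //.
by case: (k == val j); rewrite ?mulr1 ?mulr0 ?addr0.
Qed.

Lemma cvg_eq_right (R : realType) (f g : R -> R) (l : R) :
  (forall h, 0 < h -> f h = g h) -> g @ 0^'+ --> l -> f @ 0^'+ --> l.
Proof.
move=> fg gl; apply: cvg_trans gl; apply: near_eq_cvg.
by apply: filterS (nbhs_right_gt 0) => h /fg ->.
Qed.

Lemma jac_seir (R : realType) (beta lam gam M q kw kP ws : R) (x : 'rV[R]_4) (fd : R) :
  (fun h => (fear lam M q (sE x + h) - fear lam M q (sE x)) / h) @ 0^'+ --> fd ->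
  is_jacobian (seir_field beta lam gam M q kw kP ws) x
    (Jm lam (beta * (1 - sW x)) (beta * sI x) gam (kw * (1 - ws * sP x) * fd) kw
        (kw * ws * fear lam M q (sE x)) kP).
Proof.
move=> Hfd i j.
rewrite /Jm /seir_field /sE /sI /sW /sP.
case: i => [[|[|[|[|i]]]] Hi] //; case: j => [[|[|[|[|j]]]] Hj] //.
all: rewrite [X in _ --> X]mxE /=.
all: try (match goal with |- _ @ _ --> ?c =>
  apply: (@cvg_eq_right _ _ (fun=> c)); last exact: cvg_cst end;
  move=> h h0; rewrite !coordD //= /mkstate !mxE /=; field; exact: lt0r_neq0 h0).
apply: (@cvg_eq_right _ _ (fun h => kw * (1 - ws * x ord0 (inord 3)) *
   ((fear lam M q (x ord0 (inord 0) + h) - fear lam M q (x ord0 (inord 0))) / h))).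
  move=> h h0; rewrite !coordD //= /mkstate !mxE /=; field; exact: lt0r_neq0 h0.
by apply: cvgM; [exact: cvg_cst | exact: Hfd].
Qed.
Lemma powR_quot (R : realType) (E q : R) : 0 < E ->
  (fun h => ((E + h) `^ q - E `^ q) / h) @ 0^'+ --> q * E `^ (q - 1).
Proof.
move=> E0; have [H1 H2] := is_derive1_powR q E0.
apply: cvg_dnbhs_at_right.
have -> : (fun h => ((E + h) `^ q - E `^ q) / h) =
    (fun h => h^-1 *: (((powR (R:=R))^~ q \o shift E) h%:A - E `^ q)).
  apply/funext => h /=. rewrite mulrC. have -> : h%:A = h by rewrite /GRing.scale /= mulr1. by rewrite [h + E]addrC.
rewrite -H2; exact: H1.
Qed.

Definition fdE (R : realType) (lam M q E : R) : R :=
  lam `^ q * (q * E `^ (q - 1)) * M `^ q / ((M `^ q + lam `^ q * E `^ q) ^+ 2).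

Lemma fear_quot_pos (R : realType) (lam M q E : R) : 0 < lam -> 0 < M -> 0 < E ->
  (fun h => (fear lam M q (E + h) - fear lam M q E) / h) @ 0^'+ --> fdE lam M q E.
Proof.
move=> l0 M0 E0.
set a := lam `^ q; set m := M `^ q; set e := E `^ q; set d := q * E `^ (q - 1).
pose u := fun h => ((E + h) `^ q - E `^ q) / h.
have Hu : u @ 0^'+ --> d := powR_quot E0.
have a0 : 0 < a by apply: powR_gt0.
have m0 : 0 < m by apply: powR_gt0.
have e0 : 0 <= e by apply: powR_ge0.
apply: (@cvg_eq_right _ _ (fun h => (a * u h * m) * ((m + a * (e + h * u h)) * (m + a * e))^-1)).
  move=> h h0.
  have hu : (E + h) `^ q = e + h * u h by rewrite /u /e; field; exact: lt0r_neq0.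
  have p1 : 0 <= (E + h) `^ q by apply: powR_ge0.
  rewrite /fear !powRM ?(ltW l0) ?(ltW E0) //; last by rewrite ltW // addr_gt0.
  rewrite -/a -/m -/e hu.
  have q1 : 0 < m + a * (e + h * u h) by rewrite -hu; apply: ltr_pwDl => //; apply: mulr_ge0 => //; exact: ltW.
  have q2 : 0 < m + a * e by apply: ltr_pwDl => //; apply: mulr_ge0 => //; exact: ltW.
  field; rewrite ?lt0r_neq0 //.
have -> : fdE lam M q E = (a * d * m) * ((m + a * (e + 0 * d)) * (m + a * e))^-1.
  by rewrite /fdE mul0r addr0 expr2.
apply: cvgM; first by apply: cvgMr_tmp; apply: cvgMl_tmp; exact: Hu.
apply: cvgV.
  rewrite mul0r addr0 mulf_neq0 // lt0r_neq0 // ltr_pwDl // mulr_ge0 //; exact: ltW.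
apply: cvgMr_tmp.
apply: cvgD; first exact: cvg_cst.
apply: cvgMl_tmp.
apply: cvgD; first exact: cvg_cst.
apply: cvgM => //.
exact: cvg_at_right_filter cvg_id.
Qed.

Lemma fear0 (R : realType) (lam M q : R) : 0 < M -> 0 < q -> fear lam M q 0 = 0.
Proof. by move=> M0 q0; rewrite /fear mulr0 powR0 ?mul0r // lt0r_neq0. Qed.

Lemma fear_quot0 (R : realType) (lam M q : R) : 0 < lam -> 0 < M -> 1 <= q ->
  exists fd0 : R, (fun h : R => (fear lam M q (0 + h) - fear lam M q 0) / h) @ (0:R)^'+ --> fd0.
Proof.
move=> l0 M0 q1; have q0 : 0 < q by apply: (lt_le_trans ltr01 q1).
set a := lam `^ q; set m := M `^ q.
have a0 : 0 < a by apply: powR_gt0.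
have m0 : 0 < m by apply: powR_gt0.
have [L HL] : exists L : R, (fun h : R => h `^ (q - 1)) @ (0:R)^'+ --> L.
  have [->|qn1] := eqVneq q 1.
    exists 1; rewrite subrr; under eq_fun do rewrite powRr0; exact: cvg_cst.
  exists 0; apply: powR_cvg0; rewrite subr_gt0 lt_neqAle q1 andbT eq_sym //.
exists (a * L * (m + a * 0)^-1).
apply: (@cvg_eq_right _ _ (fun h : R => (a * h `^ (q - 1)) * (m + a * h `^ q)^-1)).
  move=> h h0; rewrite fear0 // subr0 add0r /fear powRM ?(ltW l0) ?(ltW h0) // -/a -/m.
  rewrite -(mulr_powRB1 (ltW h0) q0).
  have p0 : 0 <= h `^ (q - 1) by apply: powR_ge0.
  have : 0 < m + a * (h * h `^ (q - 1)).
    have : 0 <= a * (h * h `^ (q - 1)).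
      by apply: mulr_ge0; [exact: ltW|apply: mulr_ge0 => //; exact: ltW].
    lra.
  move=> ?; field; by rewrite ?lt0r_neq0 // gt_eqF.
apply: cvgM; first by apply: cvgMl_tmp.
apply: cvgV; first by rewrite mulr0 addr0 lt0r_neq0.
apply: cvgD; first exact: cvg_cst.
by apply: cvgMl_tmp; apply: powR_cvg0.
Qed.

Lemma ReNum (R : realType) (z : R[i]) : ('Re z < 0) = (cRe z < 0).
Proof. by rewrite -complexRe ltcE /= eqxx. Qed.

Lemma ImNum (R : realType) (z : R[i]) : ('Im z != 0) = (cIm z != 0).
Proof. by rewrite -complexIm eq_complex /= eqxx andbT. Qed.

Section Coords.
Variable R : realType.
Implicit Types (E I w P : R) (x : 'rV[R]_4).
Lemma sE_mk E I w P : sE (mkstate E I w P) = E.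
Proof. by rewrite /sE /mkstate mxE /= inordK. Qed.
Lemma sI_mk E I w P : sI (mkstate E I w P) = I.
Proof. by rewrite /sI /mkstate mxE /= inordK. Qed.
Lemma sW_mk E I w P : sW (mkstate E I w P) = w.
Proof. by rewrite /sW /mkstate mxE /= inordK. Qed.
Lemma sP_mk E I w P : sP (mkstate E I w P) = P.
Proof. by rewrite /sP /mkstate mxE /= inordK. Qed.
Lemma sE0 : sE (0 : 'rV[R]_4) = 0. Proof. by rewrite /sE mxE. Qed.
Lemma sI0 : sI (0 : 'rV[R]_4) = 0. Proof. by rewrite /sI mxE. Qed.
Lemma sW0 : sW (0 : 'rV[R]_4) = 0. Proof. by rewrite /sW mxE. Qed.
Lemma sP0 : sP (0 : 'rV[R]_4) = 0. Proof. by rewrite /sP mxE. Qed.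
Lemma state_eq0 x : sE x = 0 -> sI x = 0 -> sW x = 0 -> sP x = 0 -> x = 0.
Proof.
rewrite /sE /sI /sW /sP => h0 h1 h2 h3; apply/rowP => k; rewrite [RHS]mxE.
have -> : k = inord k by apply/val_inj; rewrite /= inordK.
by case: k => [[|[|[|[|k]]]] Hk] //=.
Qed.
Lemma mkstate_eq0 E I w P : E = 0 -> I = 0 -> w = 0 -> P = 0 -> mkstate E I w P = 0.
Proof.
move=> *; apply: state_eq0; by rewrite ?sE_mk ?sI_mk ?sW_mk ?sP_mk.
Qed.
End Coords.

Lemma fear_ge0 (R : realType) (lam M q E : R) : 0 < M -> 0 <= fear lam M q E.
Proof. by move=> M0; rewrite /fear divr_ge0 ?addr_ge0 ?powR_ge0. Qed.

Lemma fear_lt1 (R : realType) (lam M q E : R) : 0 < M -> fear lam M q E < 1.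
Proof.
move=> M0; rewrite /fear ltr_pdivrMr ?mul1r; last first.
  by rewrite ltr_pwDl ?powR_ge0 ?powR_gt0.
by rewrite ltr_pwDl ?powR_ge0 ?powR_gt0.
Qed.

Lemma ss_eqs (R : realType) (beta lam gam M q kw kP ws : R) (x : 'rV[R]_4) :
  steady_state (seir_field beta lam gam M q kw kP ws) x ->
  [/\ beta * (1 - sW x) * sI x - lam * sE x = 0, lam * sE x - gam * sI x = 0,
      kw * (fear lam M q (sE x) * (1 - ws * sP x) - sW x) = 0 &
      kP * (sW x - sP x) = 0].
Proof.
rewrite /steady_state /seir_field => H.
have := congr1 (@sE R) H; have := congr1 (@sI R) H.
have := congr1 (@sW R) H; have := congr1 (@sP R) H.
by rewrite sE_mk sI_mk sW_mk sP_mk sE0 sI0 sW0 sP0.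
Qed.

Lemma ss_cases (R : realType) (beta lam gam M q kw kP ws : R) (x : 'rV[R]_4) :
  admissible beta lam gam M q kw kP ws -> phys x ->
  steady_state (seir_field beta lam gam M q kw kP ws) x ->
  x = 0 \/ (0 < sI x /\ beta * (1 - sW x) = gam /\
            fear lam M q (sE x) * (1 - ws * sW x) = sW x).
Proof.
move=> [b0 [l0 [g0 [M0 [kw0 [kP0 [q1 ws0]]]]]]] [E0 I0] /ss_eqs [e0 e1 e2 e3].
have q0 : 0 < q by apply: (lt_le_trans ltr01 q1).
have hP : sP x = sW x.
  by move/eqP: e3; rewrite mulf_eq0 (gt_eqF kP0) /= subr_eq0 => /eqP.
have hW : fear lam M q (sE x) * (1 - ws * sW x) = sW x.
  by move/eqP: e2; rewrite mulf_eq0 (gt_eqF kw0) /= subr_eq0 hP => /eqP.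
have [I00|Ip] := eqVneq (sI x) 0.
  left.
  have hE : sE x = 0.
    by move/eqP: e1; rewrite I00 mulr0 subr0 mulf_eq0 (gt_eqF l0) => /eqP.
  have hW0 : sW x = 0 by rewrite -hW hE fear0 // mul0r.
  by apply: state_eq0 => //; rewrite hP.
right; have Ip' : 0 < sI x by rewrite lt_neqAle eq_sym Ip.
split=> //; split=> //.
have : (beta * (1 - sW x) - gam) * sI x = 0.
  have -> : (beta * (1 - sW x) - gam) * sI x =
    (beta * (1 - sW x) * sI x - lam * sE x) + (lam * sE x - gam * sI x) by ring.
  by rewrite e0 e1 addr0.
by move/eqP; rewrite mulf_eq0 (negPf Ip) orbF subr_eq0 => /eqP.
Qed.

Lemma arith1 (R : realType) (beta gam ws f W : R) :
  0 < beta -> beta < gam -> 0 <= ws -> 0 <= f -> beta * (1 - W) = gam ->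
  f * (1 - ws * W) = W -> False.
Proof.
move=> b0 bg ws0 f0 hb hW.
have W0 : W < 0 by nra.
have : 0 <= f * (1 - ws * W) by apply: mulr_ge0 => //; nra.
lra.
Qed.

Lemma arith3 (R : realType) (beta gam ws f W : R) :
  0 < beta -> 0 < gam -> 0 < ws -> gam < ws * (beta - gam) -> 0 <= f -> f < 1 ->
  beta * (1 - W) = gam -> f * (1 - ws * W) = W -> False.
Proof.
move=> b0 g0 ws0 hg f0 f1 hb hW.
have bg : 0 < beta - gam by nra.
have bW : beta * W = beta - gam by lra.
have W0 : 0 < W by nra.
have lt : 1 - ws * W < W.
  have : beta * (1 - ws * W) < beta * W.
    by rewrite mulrBr mulr1 mulrCA bW; nra.
  by rewrite ltr_pM2l.
have [c0|c0] := lerP 0 (1 - ws * W).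
  have : f * (1 - ws * W) <= 1 - ws * W by rewrite ler_piMl // ltW.
  lra.
have : f * (1 - ws * W) <= 0 by apply: mulr_ge0_le0 => //; exact: ltW.
lra.
Qed.

Lemma uniq1 (R : realType) (beta lam gam M q kw kP ws : R) :
  admissible beta lam gam M q kw kP ws -> beta < gam ->
  forall x, phys x -> steady_state (seir_field beta lam gam M q kw kP ws) x -> x = 0.
Proof.
move=> adm bg x px sx; case: (ss_cases adm px sx) => // [[I0 [hb hW]]]; clear px sx.
move: adm => [b0 [l0 [g0 [M0 [kw0 [kP0 [q1 ws0]]]]]]].
exfalso; exact: (arith1 b0 bg ws0 (@fear_ge0 R lam M q (sE x) M0) hb hW).
Qed.

Lemma uniq3 (R : realType) (beta lam gam M q kw kP ws : R) :
  admissible beta lam gam M q kw kP ws -> 0 < ws -> gam < ws * (beta - gam) ->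
  forall x, phys x -> steady_state (seir_field beta lam gam M q kw kP ws) x -> x = 0.
Proof.
move=> adm ws0 hg x px sx; case: (ss_cases adm px sx) => // [[I0 [hb hW]]]; clear px sx.
move: adm => [b0 [l0 [g0 [M0 [kw0 [kP0 [q1 _]]]]]]].
exfalso; exact: (arith3 b0 g0 ws0 hg (@fear_ge0 R lam M q (sE x) M0) (@fear_lt1 R lam M q (sE x) M0) hb hW).
Qed.

Lemma jac0 (R : realType) (beta lam gam M q kw kP ws : R) :
  admissible beta lam gam M q kw kP ws ->
  exists A, is_jacobian (seir_field beta lam gam M q kw kP ws) 0 (Jm lam beta 0 gam A kw 0 kP).
Proof.
move=> [b0 [l0 [g0 [M0 [kw0 [kP0 [q1 ws0]]]]]]].
have q0 : 0 < q by apply: (lt_le_trans ltr01 q1).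
have [fd0 H] := fear_quot0 l0 M0 q1.
exists (kw * (1 - ws * 0) * fd0).
have := @jac_seir R beta lam gam M q kw kP ws 0 fd0.
rewrite sE0 sI0 sW0 sP0 fear0 // !mulr0 subr0 mulr1; apply.
by rewrite fear0 // in H.

Qed.

Lemma dfe_det (R : realType) (l b g A kw kP : R) (z : R[i]) :
  \det (z%:M - map_mx (real_complex R) (Jm l b 0 g A kw 0 kP)) =
  (z + kw%:C) * (z + kP%:C) * ((z + l%:C) * (z + g%:C) - l%:C * b%:C).
Proof. by rewrite detJ rmorph0 !(mul0r, mulr0, addr0). Qed.

Lemma dfe_stable (R : realType) (l b g kw kP : R) (z : R[i]) :
  0 < l -> 0 < g -> 0 < kw -> 0 < kP -> b < g ->
  (z + kw%:C) * (z + kP%:C) * ((z + l%:C) * (z + g%:C) - l%:C * b%:C) = 0 ->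
  cRe z < 0.
Proof.
move=> l0 g0 kw0 kP0 bg /eqP; rewrite !mulf_eq0 -!orbA.
case/or3P => /eqP H.
- by have := congr1 (@complex.Re R) H; rewrite !cxE /=; lra.
- by have := congr1 (@complex.Re R) H; rewrite !cxE /=; lra.
have := congr1 (@complex.Re R) H; have := congr1 (@complex.Im R) H.
rewrite !cxE /=; move: (cRe z) (cIm z) => x y H2 H1.
rewrite ltNge; apply/negP => x0.
have y0 : y = 0.
  have : y * (2 * x + l + g) = 0 by rewrite -H2; ring.
  by move/eqP; rewrite mulf_eq0 => /orP [/eqP //|/eqP]; lra.
subst y.
have : l * b < (x + l) * (x + g) by nra.
lra.
Qed.

Lemma dfe_unstable (R : realType) (l b g kw kP : R) :
  0 < l -> 0 < g -> 0 < kw -> 0 < kP -> g < b ->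
  exists z : R[i], (z + kw%:C) * (z + kP%:C) * ((z + l%:C) * (z + g%:C) - l%:C * b%:C) = 0
    /\ 0 < cRe z.
Proof.
move=> l0 g0 kw0 kP0 gb.
set D := (l + g) ^+ 2 + 4 * l * (b - g).
have D0 : 0 <= D by rewrite /D; apply: addr_ge0; [exact: sqr_ge0|nra].
set s := Num.sqrt D.
have s2 : s ^+ 2 = D by rewrite sqr_sqrtr.
have s0 : 0 <= s by apply: sqrtr_ge0.
set r := (s - (l + g)) / 2.
have ss : s * s = D by rewrite -expr2.
have lgs : l + g < s.
  rewrite ltNge; apply/negP => H.
  have : s * s <= (l + g) * (l + g) by nra.
  rewrite ss /D; nra.
have r0 : 0 < r by rewrite /r; lra.
have hr : (r + l) * (r + g) - l * b = 0.
  have -> : (r + l) * (r + g) - l * b = (s * s - D) / 4 by rewrite /r /D; field.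
  by rewrite ss subrr mul0r.
clearbody r.
exists r%:C; split; last by rewrite ReC.
have -> : (r%:C + l%:C) * (r%:C + g%:C) - l%:C * b%:C = ((r + l) * (r + g) - l * b)%:C.
  by rewrite rmorphB !rmorphM !rmorphD.
by rewrite hr rmorph0 mulr0.
Qed.

Lemma regime2_conv (R : realType) (beta gam ws : R) : 0 <= ws -> 0 < gam ->
  regime2 beta gam ws -> 0 < beta - gam /\ ws * (beta - gam) < gam.
Proof.
move=> ws0 g0 [h1 h2]; split => //; move: h2; rewrite /gam_over_ws.
have [->|wsn0] := eqVneq ws 0; first by rewrite mul0r.
have wsp : 0 < ws by rewrite lt_neqAle eq_sym wsn0.
by rewrite lte_fin ltr_pdivlMr // mulrC.
Qed.

Lemma regime3_conv (R : realType) (beta gam ws : R) : 0 <= ws ->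
  (gam_over_ws gam ws < (beta - gam)%:E)%E -> 0 < ws /\ gam < ws * (beta - gam).
Proof.
move=> ws0; rewrite /gam_over_ws; have [->|wsn0] := eqVneq ws 0; first by rewrite ltNge leey.
have wsp : 0 < ws by rewrite lt_neqAle eq_sym wsn0.
by rewrite lte_fin ltr_pdivrMr // mulrC.
Qed.

Lemma endemic_facts (R : realType) (beta lam gam M q kw kP ws : R) :
  admissible beta lam gam M q kw kP ws -> 0 < beta - gam -> ws * (beta - gam) < gam ->
  let xe := endemic_ss beta lam gam M q ws in
  let X := endemic_X beta gam ws in
  0 < X /\ sE xe = M / lam * X `^ q^-1 /\ sI xe = M / gam * X `^ q^-1 /\
      sW xe = (beta - gam) / beta /\ sP xe = (beta - gam) / beta /\
      fear lam M q (sE xe) = X / (1 + X).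
Proof.
move=> [b0 [l0 [g0 [M0 [kw0 [kP0 [q1 ws0]]]]]]] bg wg xe X.
have q0 : 0 < q by apply: (lt_le_trans ltr01 q1).
have X0 : 0 < X by rewrite /X /endemic_X divr_gt0 // subr_gt0.
have hE : sE xe = M / lam * X `^ q^-1 by rewrite /xe /endemic_ss sE_mk.
have hI : sI xe = M / gam * X `^ q^-1 by rewrite /xe /endemic_ss sI_mk.
have hW : sW xe = (beta - gam) / beta by rewrite /xe /endemic_ss sW_mk.
have hP : sP xe = (beta - gam) / beta by rewrite /xe /endemic_ss sP_mk.
do 5 (split => //).
rewrite hE /fear.
have -> : lam * (M / lam * X `^ q^-1) = M * X `^ q^-1 by field; exact: lt0r_neq0.
rewrite powRM ?(ltW M0) ?powR_ge0 // -powRrM mulVf ?lt0r_neq0 // powRr1 ?(ltW X0) //.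
have : 0 < M `^ q by apply: powR_gt0.
move=> Mq; have MX : 0 < M `^ q * X by apply: mulr_gt0.
by field; rewrite ?lt0r_neq0 //; lra.
Qed.

Lemma ReNum_pos (R : realType) (z : R[i]) : (0 < 'Re z) = (0 < cRe z).
Proof. by rewrite -complexRe ltcE /= eqxx. Qed.

Lemma fdE_gt0 (R : realType) (lam M q E : R) : 0 < lam -> 0 < M -> 0 < E -> 0 < q ->
  0 < fdE lam M q E.
Proof.
move=> l0 M0 E0 q0; rewrite /fdE; apply: divr_gt0.
  by apply: mulr_gt0; [apply: mulr_gt0; [apply: powR_gt0|apply: mulr_gt0 => //; apply: powR_gt0]|apply: powR_gt0].
apply: exprn_gt0; apply: addr_gt0; first exact: powR_gt0.
by apply: mulr_gt0; apply: powR_gt0.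
Qed.

Lemma steady0 (R : realType) (beta lam gam M q kw kP ws : R) :
  admissible beta lam gam M q kw kP ws ->
  steady_state (seir_field beta lam gam M q kw kP ws) 0.
Proof.
move=> [b0 [l0 [g0 [M0 [kw0 [kP0 [q1 ws0]]]]]]].
have q0 : 0 < q by apply: (lt_le_trans ltr01 q1).
rewrite /steady_state /seir_field; apply: mkstate_eq0;
  rewrite ?sE0 ?sI0 ?sW0 ?sP0 ?fear0 //; ring.
Qed.

Lemma unstable0 (R : realType) (beta lam gam M q kw kP ws : R) :
  admissible beta lam gam M q kw kP ws -> gam < beta ->
  loc_unstable (seir_field beta lam gam M q kw kP ws) 0.
Proof.
move=> adm gb; have [A HJ] := jac0 adm.
move: adm => [b0 [l0 [g0 [M0 [kw0 [kP0 [q1 ws0]]]]]]].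
exists (Jm lam beta 0 gam A kw 0 kP); split => //.
have [z [Hz Rz]] := dfe_unstable l0 g0 kw0 kP0 gb.
exists z; split; last by rewrite ReNum_pos.
by apply/eigen_det; rewrite dfe_det.
Qed.

Lemma part1 (R : realType) (beta lam gam M q kw kP ws : R) :
  admissible beta lam gam M q kw kP ws -> beta < gam ->
  let F := seir_field beta lam gam M q kw kP ws in
  (forall x, phys x -> steady_state F x -> x = 0) /\
  steady_state F 0 /\ loc_asym_stable F 0.
Proof.
move=> adm bg F; split; first exact: uniq1.
split; first exact: steady0.
have [A HJ] := jac0 adm.
move: adm => [b0 [l0 [g0 [M0 [kw0 [kP0 [q1 ws0]]]]]]].
exists (Jm lam beta 0 gam A kw 0 kP); split => // z /eigen_det.
rewrite dfe_det ReNum; exact: dfe_stable.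
Qed.

Lemma part3 (R : realType) (beta lam gam M q kw kP ws : R) :
  admissible beta lam gam M q kw kP ws ->
  (gam_over_ws gam ws < (beta - gam)%:E)%E ->
  let F := seir_field beta lam gam M q kw kP ws in
  (forall x, phys x -> steady_state F x -> x = 0) /\
  steady_state F 0 /\ loc_unstable F 0.
Proof.
move=> adm h3 F.
have [b0 [l0 [g0 [M0 [kw0 [kP0 [q1 ws0]]]]]]] := adm.
have [wsp hg] := regime3_conv ws0 h3.
split; first exact: uniq3.
split; first exact: steady0.
apply: unstable0 => //; nra.
Qed.

Lemma part2 (R : realType) (beta lam gam M q kw kP ws : R) :
  admissible beta lam gam M q kw kP ws -> regime2 beta gam ws ->
  let F := seir_field beta lam gam M q kw kP ws in
  let xe := endemic_ss beta lam gam M q ws in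
  loc_unstable F 0 /\ steady_state F xe /\
  (0 < sE xe /\ 0 < sI xe /\ 0 < sW xe /\ 0 < sP xe) /\ loc_asym_stable F xe.
Proof.
move=> adm r2 F xe.
have [b0 [l0 [g0 [M0 [kw0 [kP0 [q1 ws0]]]]]]] := adm.
have q0 : 0 < q by apply: (lt_le_trans ltr01 q1).
have [bg wg] := regime2_conv ws0 g0 r2.
have [X0 [hE [hI [hW [hP hf]]]]] := endemic_facts adm bg wg.
rewrite -/xe in hE hI hW hP hf.
set X := endemic_X beta gam ws in X0 hE hI hW hP hf.
set Y := X `^ q^-1 in hE hI.
have Y0 : 0 < Y by apply: powR_gt0.
have cpos : 0 < gam - ws * (beta - gam) by lra.
split; first by apply: unstable0 => //; lra.
split.
  rewrite /steady_state /F /seir_field; apply: mkstate_eq0; rewrite ?hf ?hE ?hI ?hW ?hP.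
  - by field; rewrite !lt0r_neq0.
  - by field; rewrite !lt0r_neq0.
  - rewrite /X /endemic_X; field.
    have : 0 < beta - ws * (beta - gam) by lra.
    by rewrite !lt0r_neq0 //; lra.
  - by rewrite subrr mulr0.
have E0 : 0 < sE xe by rewrite hE; apply: mulr_gt0 => //; apply: divr_gt0.
split.
  split => //; split; first by rewrite hI; apply: mulr_gt0 => //; apply: divr_gt0.
  by split; [rewrite hW|rewrite hP]; apply: divr_gt0.
have Hfd := @fear_quot_pos R lam M q (sE xe) l0 M0 E0.
have HJ := @jac_seir R beta lam gam M q kw kP ws xe _ Hfd.
eexists; split; first exact: HJ.
move=> z /eigen_det; rewrite detJ => Hz.
rewrite ReNum ltNge; apply/negP => Rz.
have hb1 : beta * (1 - sW xe) = gam by rewrite hW; field; rewrite lt0r_neq0.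
have hA : 0 < kw * (1 - ws * sP xe) * fdE lam M q (sE xe).
  apply: mulr_gt0; last exact: fdE_gt0.
  apply: mulr_gt0 => //.
  have : ws * ((beta - gam) / beta) < 1 by rewrite mulrA ltr_pdivrMr // mul1r; lra.
  by rewrite hP; lra.
have hC : 0 < beta * sI xe by apply: mulr_gt0 => //; rewrite hI; apply: mulr_gt0 => //; apply: divr_gt0.
have hB : 0 <= kw * ws * fear lam M q (sE xe).
  by apply: mulr_ge0; [apply: mulr_ge0 => //; exact: ltW | exact: fear_ge0].
have := endemic_root l0 g0 kw0 kP0 hB (mulr_gt0 hA hC) Rz.
rewrite hb1 -[_%:C * (beta * sI xe)%:C]rmorphM in Hz.
by rewrite Hz eqxx.
Qed.

Lemma jac_unique (R : realType) (F : 'rV[R]_4 -> 'rV[R]_4) x J1 J2 :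
  is_jacobian F x J1 -> is_jacobian F x J2 -> J1 = J2.
Proof.
move=> H1 H2; apply/matrixP => i j.
rewrite -(cvg_lim (@Rhausdorff R) (H1 i j)); exact: (cvg_lim (@Rhausdorff R) (H2 i j)).
Qed.

Lemma example_nonosc (R : realType) :
  [/\ admissible (4 : R) 1 1 1 1 1 1 0, regime2 (4 : R) 1 0 &
         ~ loc_oscillatory (seir_field (4 : R) 1 1 1 1 1 1 0)
                           (endemic_ss (4 : R) 1 1 1 1 0)].
Proof.
have adm : admissible (4 : R) 1 1 1 1 1 1 0 by rewrite /admissible; do !split => //; lra.
have r2 : regime2 (4 : R) 1 0.
  by split; rewrite /gam_over_ws ?eqxx ?ltry //; lra.
split => //.
have [bg wg] := regime2_conv (lexx 0) ltr01 r2.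
have [X0 [hE [hI [hW [hP hf]]]]] := endemic_facts adm bg wg.
set xe := endemic_ss _ _ _ _ _ _ in hE hI hW hP hf *.
have hX : endemic_X (4 : R) 1 0 = 3 by rewrite /endemic_X; field.
rewrite hX invr1 powRr1 // in hE hI hf.
have hE' : sE xe = 3 by rewrite hE; field.
have hI' : sI xe = 3 by rewrite hI; field.
have E0 : 0 < sE xe by rewrite hE'.
have Hfd := @fear_quot_pos R 1 1 1 (sE xe) ltr01 ltr01 E0.
have HJ := @jac_seir R 4 1 1 1 1 1 1 0 xe _ Hfd.
move=> [J [HJ' [z [Hz Iz]]]].
have ? := jac_unique HJ HJ'; subst J.
have hfd : fdE 1 1 1 (sE xe) = 1 / 16.
  by rewrite hE' /fdE subrr powRr0 !powRr1 //; field.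
move: Hz => /eigen_det; rewrite detJ hfd hW hP hI' => Hz.
have Hz' : (z + 1%:C) * (z + 1%:C) * (z + (1/2)%:C) * (z + (3/2)%:C) = 0.
  rewrite -[RHS]Hz; move: (z) => [x y].
  by apply/eqP; rewrite eq_complex; apply/andP; split; apply/eqP; rewrite !cxE /=; field.
suff Hi : cIm z = 0 by move: Iz; rewrite ImNum Hi eqxx.
move/eqP: Hz'; rewrite !mulf_eq0 -!orbA => /or4P [] /eqP H;
  by have := congr1 (@complex.Im R) H; rewrite !cxE /= addr0.
Qed.


Lemma example_osc (R : realType) :
  [/\ admissible (6 : R) 2 1 1 1 (3/2) 1 0, regime2 (6 : R) 1 0 &
         loc_oscillatory (seir_field (6 : R) 2 1 1 1 (3/2) 1 0)
                           (endemic_ss (6 : R) 2 1 1 1 0)].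
Proof.
have adm : admissible (6 : R) 2 1 1 1 (3/2) 1 0 by rewrite /admissible; do !split => //; lra.
have r2 : regime2 (6 : R) 1 0.
  by split; rewrite /gam_over_ws ?eqxx ?ltry //; lra.
split => //.
have [bg wg] := regime2_conv (lexx 0) ltr01 r2.
have [X0 [hE [hI [hW [hP hf]]]]] := endemic_facts adm bg wg.
set xe := endemic_ss _ _ _ _ _ _ in hE hI hW hP hf *.
have hX : endemic_X (6 : R) 1 0 = 5 by rewrite /endemic_X; field.
rewrite hX invr1 powRr1 // in hE hI hf.
have hE' : sE xe = 5 / 2 by rewrite hE; field.
have hI' : sI xe = 5 by rewrite hI; field.
have E0 : 0 < sE xe by rewrite hE'.
have l0 : (0 : R) < 2 by [].
have Hfd := @fear_quot_pos R 2 1 1 (sE xe) l0 ltr01 E0.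
have HJ := @jac_seir R 6 2 1 1 1 (3/2) 1 0 xe _ Hfd.
eexists; split; first exact: HJ.
exists (@Complex R (- 2) 1); split; last by rewrite ImNum /= oner_neq0.
have hfd : fdE 2 1 1 (sE xe) = 2 / 36.
  by rewrite hE' /fdE subrr powRr0 !powRr1 //; field.
apply/eigen_det; rewrite detJ hfd hW hP hI'.
have ReCx (a b : R) : cRe (a +i* b)%C = a by [].
have ImCx (a b : R) : cIm (a +i* b)%C = b by [].
by apply/eqP; rewrite eq_complex; apply/andP; split; apply/eqP; rewrite !(cxE, ReCx, ImCx); field.
Qed.

Theorem theorem2 (R : realType) :
  (forall beta lam gam M q kw kP ws : R,
    admissible beta lam gam M q kw kP ws ->
    let F := seir_field beta lam gam M q kw kP ws in
    (* 1 *)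
    (beta < gam ->
       (forall x, phys x -> steady_state F x -> x = 0) /\
       steady_state F 0 /\ loc_asym_stable F 0) /\
    (* 2 *)
    (regime2 beta gam ws ->
       let xe := endemic_ss beta lam gam M q ws in
       loc_unstable F 0 /\
       steady_state F xe /\
       (0 < sE xe /\ 0 < sI xe /\ 0 < sW xe /\ 0 < sP xe) /\
       loc_asym_stable F xe) /\
    (* 3 *)
    (((gam_over_ws gam ws) < (beta - gam)%:E)%E ->
       (forall x, phys x -> steady_state F x -> x = 0) /\
       steady_state F 0 /\ loc_unstable F 0)) /\
  (* 2, last sentence: oscillations near the endemic state occur for some, but
     not all, admissible parameter values in regime 2 *)
  (exists beta lam gam M q kw kP ws : R,
     [/\ admissible beta lam gam M q kw kP ws, regime2 beta gam ws &
         loc_oscillatory (seir_field beta lam gam M q kw kP ws)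
                         (endemic_ss beta lam gam M q ws)]) /\
  (exists beta lam gam M q kw kP ws : R,
     [/\ admissible beta lam gam M q kw kP ws, regime2 beta gam ws &
         ~ loc_oscillatory (seir_field beta lam gam M q kw kP ws)
                           (endemic_ss beta lam gam M q ws)]).
Proof.
split.
  move=> beta lam gam M q kw kP ws adm F.
  split; first exact: (part1 adm).
  split; first exact: (part2 adm).
  exact: (part3 adm).
split.
  by exists 6, 2, 1, 1, 1, (3/2), 1, 0; exact: example_osc.
by exists 4, 1, 1, 1, 1, 1, 1, 0; exact: example_nonosc.
Qed.
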